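(* For each integer $d\ge0$, let $T_d(t)=\sum_{i=0}^dT(d,i)t^i$ be the unique polynomial of degree $d$ satisfying $T(d,i)=T(d,d-i)$, such that for $0\le i\le d/2$, $T(d,i)$ is the coefficient of $t^i$ in $\sum_{j=0}^d\binom{d+1}{j}2^jt^j(1-t)^{d-j}$. Set $T(d,i)=0$ for $i<0$. Then for $0\le i<d/2$, $$T(d,i)=T(d-1,i)+T(d-1,i-1),$$ and for $d=2k$ with $k\ge1$, $$T(2k,k)=2T(2k-1,k-1)+\binom{2k}{k}.$$ Consequently $T(d,i)=\sum_{j=0}^i\binom{d+1}{j}$ for $0\le i\le d/2$. *)

(* Defs.v *)
From HB Require Import structures.
From mathcomp Require Import all_boot all_order all_algebra.
Set Implicit Arguments. Unset Strict Implicit. Unset Printing Implicit Defensive.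
Import Order.TTheory GRing.Theory Num.Theory.
Local Open Scope ring_scope.

Definition Tpoly (d : nat) : {poly int} :=
  \sum_(j < d.+1) (('C(d.+1, j) * 2 ^ j)%N%:R : int) *: ('X^j * (1 - 'X) ^+ (d - j)).

(* T(d,i) for natural i: coefficient of t^i of P_d for i <= d/2,
   T(d,d-i) for d/2 < i <= d (symmetry), and 0 for i > d (degree d). *)
Definition Tn (d i : nat) : int :=
  if (2 * i <= d)%N then (Tpoly d)`_i
  else if (i <= d)%N then (Tpoly d)`_(d - i)
  else 0.

Definition T (d : nat) (i : int) : int :=
  match i with
  | Posz n => Tn d n
  | Negz _ => 0
  end.

(* Main.v *)
Require Import Defs.
From HB Require Import structures.
From mathcomp Require Import all_boot all_order all_algebra.
From Stdlib Require Import Lia.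
Import Order.TTheory GRing.Theory Num.Theory.
Local Open Scope ring_scope.

Lemma key d : (1 - 'X) * Tpoly d = (1 + 'X) ^+ d.+1 - (2%:R *: 'X) ^+ d.+1 :> {poly int}.
Proof.
have -> : (1 + 'X : {poly int}) = (1 - 'X) + 2%:R *: 'X.
  by rewrite -addrA; congr (_ + _); rewrite scaler_nat mulr2n addrA addNr add0r.
rewrite exprDn big_ord_recr /= subnn expr0 mul1r binn mulr1n addrK.
rewrite /Tpoly mulr_sumr; apply: eq_bigr => j _.
rewrite -scalerAr exprZn -scalerAr scalerMnl; congr (_ *: _).
  rewrite mulnC natrM natrX mulr_natr.
  congr (_ *+ _); congr (_ ^+ _).
rewrite mulrCA -exprS mulrC subSn //; exact: ltnSE (ltn_ord j).
Qed.

Lemma coef1X n k : (k <= n)%N -> ((1 + 'X : {poly int}) ^+ n)`_k = ('C(n, k))%:R.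
Proof.
move=> hk; rewrite exprDn coef_sum.
have hk' : (k < n.+1)%N by [].
rewrite (bigD1 (Ordinal hk')) //= big1 ?addr0.
  by rewrite coefMn expr1n mul1r coefXn eqxx.
move=> i /eqP hi; rewrite coefMn expr1n mul1r coefXn.
case: eqP => [e|_]; last by rewrite mul0rn.
by exfalso; apply: hi; apply: val_inj.
Qed.

Lemma coefT d i : (i <= d)%N -> (Tpoly d)`_i = (\sum_(j < i.+1) 'C(d.+1, j))%:R.
Proof.
have H k : (k <= d)%N ->
  (Tpoly d)`_k - (if k == 0%N then 0 else (Tpoly d)`_k.-1) = ('C(d.+1, k))%:R.
  move=> hk; have := congr1 (fun p : {poly int} => p`_k) (key d).
  rewrite /= mulrBl mul1r coefB coefXM => ->.
  rewrite coefB coef1X ?exprZn ?coefZ ?coefXn ?ltn_eqF //= ?mulr0 ?subr0 //; exact: leqW.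
elim: i => [|i IH] hi.
  by have := H 0%N hi; rewrite /= subr0 big_ord1 => ->.
have := H i.+1 hi; rewrite /= big_ord_recr /= natrD -IH ?(ltnW hi) // => <-.
by rewrite addrC subrK.
Qed.

Definition S (d i : nat) : nat := \sum_(j < i.+1) 'C(d.+1, j).

Lemma TS d i : (2 * i <= d)%N -> T d (Posz i) = (S d i)%:R.
Proof.
move=> hi; rewrite /T /Tn hi coefT //; apply: leq_trans hi.
by rewrite mul2n -addnn leq_addr.
Qed.

Lemma S0 d : S d 0 = 1%N.
Proof. by rewrite /S big_ord1. Qed.

Lemma SS d i : S d i.+1 = (S d i + 'C(d.+1, i.+1))%N.
Proof. by rewrite /S big_ord_recr. Qed.

Lemma pascal d i : S d.+1 i.+1 = (S d i.+1 + S d i)%N.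
Proof.
elim: i => [|i IH].
  by rewrite !SS !S0 !bin1 add1n addn1 add1n.
have h1 := SS d i.+1; have h2 := SS d i.
have h3 : 'C(d.+2, i.+2) = ('C(d.+1, i.+2) + 'C(d.+1, i.+1))%N := binS _ _.
rewrite SS IH h1 h2 h3.
move: (S d i) ('C(d.+1, i.+1)) ('C(d.+1, i.+2)) => a b c.
rewrite -!plusE; lia.
Qed.

Lemma subz1 i : Posz i.+1 - 1 = Posz i.
Proof. by rewrite -addn1 PoszD addrK. Qed.

Theorem lemma11p2 :
  (forall d i : nat, (2 * i < d)%N ->
     T d (Posz i) = T d.-1 (Posz i) + T d.-1 (Posz i - 1)) /\
  (forall k : nat, (1 <= k)%N ->
     T (2 * k) (Posz k) = 2 * T (2 * k).-1 (Posz k - 1) + ('C(2 * k, k))%:R) /\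
  (forall d i : nat, (2 * i <= d)%N ->
     T d (Posz i) = \sum_(j < i.+1) ('C(d.+1, j))%:R).
Proof.
split; last split.
- move=> [|d] i hi //.
  rewrite TS ?(ltnW hi) // TS //.
  case: i hi => [|i] hi.
    by rewrite /= !S0 addr0.
  rewrite subz1 TS; first by rewrite pascal natrD.
  by rewrite /= -ltnS (leq_trans _ hi) // ltnS mulnS leq_addl.
- move=> [|k] // _.
  have e : (2 * k.+1 = (2 * k).+1.+1)%N by rewrite mulnS addnC addn2.
  have e' : ((2 * k.+1)%R : nat) = (2 * k).+2 by rewrite -e.
  have h : T (2 * k)%N.+1 k = (S (2 * k)%N.+1 k)%:R by rewrite TS // leqW.
  rewrite /T in h.
  have h2 : T (2 * k)%N.+2 k.+1 = (S (2 * k)%N.+2 k.+1)%:R by rewrite TS // -e.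
  rewrite ?e' e subz1 h2 /= h.
  rewrite [RHS](_ : _ = ((2 * S (2 * k)%N.+1 k) + 'C((2 * k)%N.+2, k.+1))%N%:R);
    last by rewrite natrD natrM.
  congr (_ %:R).
  rewrite pascal (SS (2 * k)%N.+1 k).
  move: (S _ k) ('C(_, _)) => a b.
  rewrite -!plusE -!multE; lia.
- by move=> d i hi; rewrite TS // /S natr_sum.
Qed.
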